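(* Let $S,T$ be left inverse semi-braces whose associated maps $r_S$ and $r_T$ are solutions, and let $\sigma:T\to\mathrm{Aut}(S)$ be a homomorphism from $(T,\cdot)$ into the automorphism group of the left inverse semi-brace $S$; write ${}^ua=\sigma(u)(a)$. Let $B=S\rtimes_\sigma T$ be the semidirect product. Then the map $r_B$ associated to $B$, which is given by $$r_B((a,u),(b,v))=\left(\left({}^u\lambda_{{}^{u^{-1}}a}(b),\,\lambda_u(v)\right),\ \left({}^{\lambda_u(v)^{-1}}\rho_{{}^ub}(a),\,\rho_v(u)\right)\right)$$ for all $(a,u),(b,v)\in S\times T$, is a solution.
   Context: An inverse semigroup is a semigroup $(S,\cdot)$ in which for each $a$ there is a unique $a^{-1}$ with $aa^{-1}a=a$, $a^{-1}aa^{-1}=a^{-1}$. A left inverse semi-brace is a triple $(S,+,\cdot)$ with $(S,+)$ a semigroup, $(S,\cdot)$ an inverse semigroup and $a(b+c)=ab+a(a^{-1}+c)$ for all $a,b,c$. In it set $\lambda_a(b)=a(a^{-1}+b)$, $\rho_b(a)=(a^{-1}+b)^{-1}b$; the map associated to $S$ is $r_S(a,b)=(\lambda_a(b),\rho_b(a))$. A solution is a map $r:X\times X\to X\times X$ with $(r\times\mathrm{id})(\mathrm{id}\times r)(r\times\mathrm{id})=(\mathrm{id}\times r)(r\times\mathrm{id})(\mathrm{id}\times r)$. An automorphism of the left inverse semi-brace $S$ is a bijection preserving both operations. The semidirect product $S\rtimes_\sigma T$ is $S\times T$ with $(a,u)+(b,v)=(a+b,u+v)$ and $(a,u)(b,v)=(a\,{}^ub,uv)$;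 it is a left inverse semi-brace and $r_B$ is its associated map. *)

(* Defs.v *)
Definition is_inverse_semigroup {X : Type} (mul : X -> X -> X) (inv : X -> X) : Prop :=
  (forall a b c, mul a (mul b c) = mul (mul a b) c) /\
  (forall a, mul (mul a (inv a)) a = a) /\
  (forall a, mul (mul (inv a) a) (inv a) = inv a) /\
  (forall a b, mul (mul a b) a = a -> mul (mul b a) b = b -> b = inv a).

Definition is_left_inverse_semi_brace {X : Type}
    (add mul : X -> X -> X) (inv : X -> X) : Prop :=
  (forall a b c, add a (add b c) = add (add a b) c) /\
  is_inverse_semigroup mul inv /\
  (forall a b c, mul a (add b c) = add (mul a b) (mul a (add (inv a) c))).

Definition lam {X : Type} (add mul : X -> X -> X) (inv : X -> X) (a b : X) : X :=
  mul a (add (inv a) b).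

Definition rho {X : Type} (add mul : X -> X -> X) (inv : X -> X) (b a : X) : X :=
  mul (inv (add (inv a) b)) b.

Definition assoc_map {X : Type} (add mul : X -> X -> X) (inv : X -> X)
    (p : X * X) : X * X :=
  (lam add mul inv (fst p) (snd p), rho add mul inv (snd p) (fst p)).

(* r is a solution of the set-theoretic Yang-Baxter equation:
   (r x id)(id x r)(r x id) = (id x r)(r x id)(id x r) on X x X x X. *)
Definition r12 {X : Type} (r : X * X -> X * X) (t : X * X * X) : X * X * X :=
  let '(x, y, z) := t in let '(x', y') := r (x, y) in (x', y', z).
Definition r23 {X : Type} (r : X * X -> X * X) (t : X * X * X) : X * X * X :=
  let '(x, y, z) := t in let '(y', z') := r (y, z) in (x, y', z').

Definition is_solution {X : Type} (r : X * X -> X * X) : Prop :=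
  forall t : X * X * X, r12 r (r23 r (r12 r t)) = r23 r (r12 r (r23 r t)).

Definition is_automorphism {X : Type} (add mul : X -> X -> X) (f : X -> X) : Prop :=
  (exists g : X -> X, (forall x, g (f x) = x) /\ (forall x, f (g x) = x)) /\
  (forall a b, f (add a b) = add (f a) (f b)) /\
  (forall a b, f (mul a b) = mul (f a) (f b)).

Definition is_action_hom {S T : Type} (addS mulS : S -> S -> S) (mulT : T -> T -> T)
    (sigma : T -> S -> S) : Prop :=
  (forall u, is_automorphism addS mulS (sigma u)) /\
  (forall u v a, sigma (mulT u v) a = sigma u (sigma v a)).

Definition sd_add {S T : Type} (addS : S -> S -> S) (addT : T -> T -> T)
    (p q : S * T) : S * T := (addS (fst p) (fst q), addT (snd p) (snd q)).
Definition sd_mul {S T : Type} (mulS : S -> S -> S) (mulT : T -> T -> T)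
    (sigma : T -> S -> S) (p q : S * T) : S * T :=
  (mulS (fst p) (sigma (snd p) (fst q)), mulT (snd p) (snd q)).
Definition sd_inv {S T : Type} (invS : S -> S) (invT : T -> T)
    (sigma : T -> S -> S) (p : S * T) : S * T :=
  (sigma (invT (snd p)) (invS (fst p)), invT (snd p)).

Definition r_B {S T : Type} (addS mulS : S -> S -> S) (invS : S -> S)
    (addT mulT : T -> T -> T) (invT : T -> T) (sigma : T -> S -> S) :
    (S * T) * (S * T) -> (S * T) * (S * T) :=
  assoc_map (sd_add addS addT) (sd_mul mulS mulT sigma) (sd_inv invS invT sigma).

(* Main.v *)
Require Import Defs.
From Stdlib Require Import Setoid.

Theorem corollary34 (S T : Type)
    (addS mulS : S -> S -> S) (invS : S -> S)
    (addT mulT : T -> T -> T) (invT : T -> T)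
    (sigma : T -> S -> S)
    (HS : is_left_inverse_semi_brace addS mulS invS)
    (HT : is_left_inverse_semi_brace addT mulT invT)
    (HrS : is_solution (assoc_map addS mulS invS))
    (HrT : is_solution (assoc_map addT mulT invT))
    (Hsigma : is_action_hom addS mulS mulT sigma) :
  is_solution (r_B addS mulS invS addT mulT invT sigma).
Proof.
  destruct HS as [_ [[SA [S1 [S2 S3]]] _]].
  destruct HT as [_ [[TA [T1 [T2 T3]]] _]].
  destruct Hsigma as [Aut Hom].
  assert (Hid : forall e x, mulT e e = e -> sigma e x = x).
  { intros e x He. destruct (Aut e) as [[g [Hg1 Hg2]] _].
    rewrite <- (Hg1 x) at 2. rewrite <- (Hg1 (sigma e x)) at 1.
    f_equal. rewrite <- Hom, He. reflexivity. }
  assert (Hr : forall u x, sigma (mulT u (invT u)) x = x).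
  { intros u x. apply Hid. rewrite TA, T1. reflexivity. }
  assert (Hl : forall u x, sigma (mulT (invT u) u) x = x).
  { intros u x. apply Hid. rewrite TA. rewrite T2. reflexivity. }
  assert (Hadd : forall u a b, sigma u (addS a b) = addS (sigma u a) (sigma u b)).
  { intros u. destruct (Aut u) as [_ [H _]]. exact H. }
  assert (Hmul : forall u a b, sigma u (mulS a b) = mulS (sigma u a) (sigma u b)).
  { intros u. destruct (Aut u) as [_ [_ H]]. exact H. }
  assert (Hinv : forall u a, sigma u (invS a) = invS (sigma u a)).
  { intros u a. apply S3; rewrite <- !Hmul; f_equal; auto. }
  assert (Hlam : forall u a b, sigma u (lam addS mulS invS a b)
             = lam addS mulS invS (sigma u a) (sigma u b)).
  { intros. unfold lam. rewrite Hmul, Hadd, Hinv. reflexivity. }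
  assert (Hrho : forall u a b, sigma u (rho addS mulS invS b a)
             = rho addS mulS invS (sigma u b) (sigma u a)).
  { intros. unfold rho. rewrite Hmul, Hinv, Hadd, Hinv. reflexivity. }
  assert (Key : forall a u b v a' u' b' v',
    r_B addS mulS invS addT mulT invT sigma ((a,u),(b,v)) = ((a',u'),(b',v')) ->
    a' = lam addS mulS invS a (sigma u b) /\ u' = lam addT mulT invT u v /\
    v' = rho addT mulT invT v u /\ sigma u' b' = rho addS mulS invS (sigma u b) a /\
    (forall x, sigma u' (sigma v' x) = sigma u (sigma v x))).
  { intros a u b v a' u' b' v' E.
    unfold r_B, assoc_map, lam, rho, sd_add, sd_mul, sd_inv in E; simpl in E.
    injection E; intros E4 E3 E2 E1; subst; clear E.
    set (w := addT (invT u) v).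
    set (c := addS (sigma (invT u) (invS a)) b).
    assert (Hc : sigma u c = addS (invS a) (sigma u b)).
    { unfold c. rewrite Hadd, <- Hom, Hr. reflexivity. }
    split; [| split; [reflexivity | split; [reflexivity | split]]].
    - rewrite Hc. reflexivity.
    - rewrite <- Hmul, <- Hom, <- TA, Hom, Hr.
      unfold rho. rewrite Hmul, Hinv, Hc. reflexivity.
    - intros x. rewrite <- !Hom. rewrite <- TA.
      rewrite (TA w (invT w) v).
      rewrite (Hom u), (Hom (mulT w (invT w))), Hr. rewrite Hom. reflexivity. }
  set (rB := r_B addS mulS invS addT mulT invT sigma).
  set (rS := assoc_map addS mulS invS).
  set (rT := assoc_map addT mulT invT).
  set (Phi := fun t : (S*T)*(S*T)*(S*T) =>
     let '((a1,u1),(a2,u2),(a3,u3)) := t in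
     ((a1, sigma u1 a2, sigma u1 (sigma u2 a3)), (u1,u2,u3))).
  assert (L12 : forall t, Phi (r12 rB t) = (r12 rS (fst (Phi t)), r12 rT (snd (Phi t)))).
  { intros [[[a1 u1] [a2 u2]] [a3 u3]].
    unfold r12 at 1. destruct (rB ((a1,u1),(a2,u2))) as [[a' u'] [b' v']] eqn:E.
    apply Key in E. destruct E as [E1 [E2 [E3 [E4 E5]]]].
    simpl. rewrite E4, E5, E1, E2, E3. reflexivity. }
  assert (L23 : forall t, Phi (r23 rB t) = (r23 rS (fst (Phi t)), r23 rT (snd (Phi t)))).
  { intros [[[a1 u1] [a2 u2]] [a3 u3]].
    unfold r23 at 1. destruct (rB ((a2,u2),(a3,u3))) as [[a' u'] [b' v']] eqn:E.
    apply Key in E. destruct E as [E1 [E2 [E3 [E4 E5]]]].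
    simpl. rewrite E4, E1, E2, E3. unfold rS, assoc_map. simpl.
    rewrite Hlam, Hrho, <- Hom. reflexivity. }
  assert (Inj : forall t1 t2, Phi t1 = Phi t2 -> t1 = t2).
  { intros [[[a1 u1] [a2 u2]] [a3 u3]] [[[b1 v1] [b2 v2]] [b3 v3]] E.
    simpl in E. injection E as H1 H2 H3 H4 H5 H6. subst.
    assert (K : forall u x y, sigma u x = sigma u y -> x = y).
    { intros u x y H. rewrite <- (Hl u x), <- (Hl u y), !Hom, H. reflexivity. }
    apply K in H2. apply K in H3. apply K in H3. subst. reflexivity. }
  intros t. apply Inj.
  rewrite L12, L23, L12, L23, L12, L23. simpl.
  destruct (Phi t) as [s1 s2]. simpl. f_equal; [apply HrS | apply HrT].
Qed.
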